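(* Consider a mean-variance team stochastic game as described in the context, and suppose the long-run average reward $\eta^{\boldsymbol{\mu}}$ takes the same value for all joint policies $\boldsymbol{\mu}\in\mathcal{U}$. Then Algorithm MV-MAPI (described in the context) converges to a Nash equilibrium $\tilde{\boldsymbol{\mu}}$, i.e. $J(\tilde{\boldsymbol{\mu}})\ge J(\mu_i,\tilde{\boldsymbol{\mu}}_{-i})$ for all $i\in\mathcal{N}$ and $\mu_i\in\mathcal{U}_i$.
   Context: Game: finite agents $\mathcal{N}=\{1,\dots,N\}$, finite state space $\mathcal{S}$, finite action sets $\mathcal{A}_i$, $\mathcal{A}=\prod_i\mathcal{A}_i$, transition kernel $P(s'|s,\boldsymbol{a})$, common reward $r:\mathcal{S}\times\mathcal{A}\to\mathbb{R}$. Policies $\mu_i:\mathcal{S}\to\Delta(\mathcal{A}_i)$ (set $\mathcal{U}_i$); joint policies $\boldsymbol{\mu}\in\mathcal{U}=\prod_i\mathcal{U}_i$ with $\boldsymbol{\mu}(\boldsymbol{a}|s)=\prod_i\mu_i(a_i|s)$; $(\mu_i,\boldsymbol{\mu}_{-i})$ means agent $i$ uses $\mu_i$, others use $\boldsymbol{\mu}_{-i}$. Standing assumption: the chain $P^{\boldsymbol{\mu}}(s'|s)=\sum_{\boldsymbol{a}}\boldsymbol{\mu}(\boldsymbol{a}|s)P(s'|s,\boldsymbol{a})$ is ergodic for every $\boldsymbol{\mu}\in\mathcal{U}$, stationary distribution $\pi^{\boldsymbol{\mu}}$. $\eta^{\boldsymbol{\mu}}=\sum_s\pi^{\boldsymbol{\mu}}(s)\sum_{\boldsymbol{a}}\boldsymbol{\mu}(\boldsymbol{a}|s)r(s,\boldsymbol{a})$;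 $\zeta^{\boldsymbol{\mu}}=\sum_s\pi^{\boldsymbol{\mu}}(s)\sum_{\boldsymbol{a}}\boldsymbol{\mu}(\boldsymbol{a}|s)(r(s,\boldsymbol{a})-\eta^{\boldsymbol{\mu}})^2$; for fixed $\beta\ge0$, $J(\boldsymbol{\mu})=\eta^{\boldsymbol{\mu}}-\beta\zeta^{\boldsymbol{\mu}}$. $f^{\boldsymbol{\mu}}(s,\boldsymbol{a})=r(s,\boldsymbol{a})-\beta(r(s,\boldsymbol{a})-\eta^{\boldsymbol{\mu}})^2$, $f^{\boldsymbol{\mu}}(s)=\sum_{\boldsymbol{a}}\boldsymbol{\mu}(\boldsymbol{a}|s)f^{\boldsymbol{\mu}}(s,\boldsymbol{a})$; $V_f^{\boldsymbol{\mu}}$ solves $V(s)=f^{\boldsymbol{\mu}}(s)-J(\boldsymbol{\mu})+\sum_{s'}P^{\boldsymbol{\mu}}(s'|s)V(s')$ (unique up to an additive constant); $Q_f^{\boldsymbol{\mu}}(s,\boldsymbol{a})=f^{\boldsymbol{\mu}}(s,\boldsymbol{a})-J(\boldsymbol{\mu})+\sum_{s'}P(s'|s,\boldsymbol{a})V_f^{\boldsymbol{\mu}}(s')$, $A_f^{\boldsymbol{\mu}}=Q_f^{\boldsymbol{\mu}}-V_f^{\boldsymbol{\mu}}$. Algorithm MV-MAPI: start with a deterministic joint policy $\boldsymbol{\mu}^{(0)}$. For $k=0,1,\dots$: set $\hat{\boldsymbol{\mu}}^{(k,0)}=\boldsymbol{\mu}^{(k)}$ and draw a random permutation $i_1,\dots,i_N$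 of the agents. For $h=1,\dots,N$: for every $s$, set $\mu^{(k+1)}_{i_h}(s)$ to be an action $a_{i_h}$ maximizing $\mathbb{E}_{\boldsymbol{a}_{-i_h}\sim\hat{\boldsymbol{\mu}}^{(k,h-1)}_{-i_h}(\cdot|s)}[A_f^{\hat{\boldsymbol{\mu}}^{(k,h-1)}}(s,a_{i_h},\boldsymbol{a}_{-i_h})]$, keeping $\mu^{(k+1)}_{i_h}(s)=\mu^{(k)}_{i_h}(s)$ whenever the latter attains the maximum; set $\hat{\boldsymbol{\mu}}^{(k,h)}=(\mu^{(k+1)}_{i_1},\dots,\mu^{(k+1)}_{i_h},\mu^{(k)}_{i_{h+1}},\dots,\mu^{(k)}_{i_N})$. If $\mu^{(k+1)}_i=\mu^{(k)}_i$ for all $i$, stop and return $\boldsymbol{\mu}^{(k)}$; otherwise set $\boldsymbol{\mu}^{(k+1)}=\hat{\boldsymbol{\mu}}^{(k,N)}$. *)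

(* Defs.v *)
From HB Require Import structures.
From mathcomp Require Import all_boot all_order all_algebra all_fingroup.
From mathcomp Require Import boolp classical_sets reals.
Set Implicit Arguments. Unset Strict Implicit. Unset Printing Implicit Defensive.
Import Order.TTheory GRing.Theory Num.Theory.
Local Open Scope ring_scope.

Definition jact (N : nat) (A : 'I_N -> finType) := {dffun forall i : 'I_N, A i}.

(* Stochastic individual policy  mu_i : S -> Delta(A_i), stored as a function
   mu_i s a = mu_i(a|s).  Joint (product) policy: one such map per agent.      *)
Definition ipol (R : realType) (S : finType) (Ai : finType) := S -> Ai -> R.
Definition jpol (R : realType) (N : nat) (S : finType) (A : 'I_N -> finType) :=
  forall i : 'I_N, ipol R S (A i).

Definition ipol_valid (R : realType) (S Ai : finType) (m : ipol R S Ai) : Prop :=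
  (forall s a, 0 <= m s a) /\ (forall s, \sum_(a : Ai) m s a = 1).
Definition jpol_valid (R : realType) N (S : finType) (A : 'I_N -> finType)
  (mu : jpol R S A) : Prop := forall i, ipol_valid (mu i).

Definition jprob (R : realType) N (S : finType) (A : 'I_N -> finType)
  (mu : jpol R S A) (s : S) (a : jact A) : R := \prod_(i < N) mu i s (a i).

Definition deviate (R : realType) N (S : finType) (A : 'I_N -> finType)
  (mu : jpol R S A) (i : 'I_N) (mi : ipol R S (A i)) : jpol R S A :=
  @dfwith _ (fun j : 'I_N => ipol R S (A j)) mu i mi.

Definition dpol N (S : finType) (A : 'I_N -> finType) := forall i : 'I_N, S -> A i.
Definition dpol_to_jpol (R : realType) N (S : finType) (A : 'I_N -> finType)
  (d : dpol S A) : jpol R S A := fun i s a => if a == d i s then 1 else 0.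

Definition kernel (R : realType) N (S : finType) (A : 'I_N -> finType) :=
  S -> jact A -> S -> R.
Definition kernel_valid (R : realType) N (S : finType) (A : 'I_N -> finType)
  (P : kernel R S A) : Prop :=
  (forall s a s', 0 <= P s a s') /\ (forall s a, \sum_(s' : S) P s a s' = 1).

Definition Pmu (R : realType) N (S : finType) (A : 'I_N -> finType)
  (P : kernel R S A) (mu : jpol R S A) (s s' : S) : R :=
  \sum_(a : jact A) jprob mu s a * P s a s'.

Fixpoint nstep (R : realType) (S : finType) (M : S -> S -> R) (n : nat) (s s' : S) : R :=
  match n with
  | 0 => if s == s' then 1 else 0
  | n.+1 => \sum_(t : S) nstep M n s t * M t s'
  end.

(* Ergodic (finite-state): irreducible and aperiodic, i.e. some power of the
   transition matrix has all entries positive (regular chain).              *)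
Definition ergodic (R : realType) (S : finType) (M : S -> S -> R) : Prop :=
  exists n, forall s s', 0 < nstep M n s s'.

Definition stationary (R : realType) (S : finType) (M : S -> S -> R)
  (p : {ffun S -> R}) : Prop :=
  (forall s, 0 <= p s) /\ \sum_(s : S) p s = 1 /\
  (forall s', \sum_(s : S) p s * M s s' = p s').

(* pi^mu : the (unique, under ergodicity) stationary distribution *)
Definition statdist (R : realType) N (S : finType) (A : 'I_N -> finType)
  (P : kernel R S A) (mu : jpol R S A) : {ffun S -> R} :=
  xget [ffun=> 0] [set p | stationary (Pmu P mu) p].

Definition etamu (R : realType) N (S : finType) (A : 'I_N -> finType)
  (P : kernel R S A) (r : S -> jact A -> R) (mu : jpol R S A) : R :=
  \sum_(s : S) statdist P mu s * \sum_(a : jact A) jprob mu s a * r s a.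

Definition zeta (R : realType) N (S : finType) (A : 'I_N -> finType)
  (P : kernel R S A) (r : S -> jact A -> R) (mu : jpol R S A) : R :=
  \sum_(s : S) statdist P mu s *
    \sum_(a : jact A) jprob mu s a * (r s a - etamu P r mu) ^+ 2.

Definition Jmv (R : realType) N (S : finType) (A : 'I_N -> finType)
  (P : kernel R S A) (r : S -> jact A -> R) (beta : R) (mu : jpol R S A) : R :=
  etamu P r mu - beta * zeta P r mu.

Definition fsa (R : realType) N (S : finType) (A : 'I_N -> finType)
  (P : kernel R S A) (r : S -> jact A -> R) (beta : R) (mu : jpol R S A)
  (s : S) (a : jact A) : R :=
  r s a - beta * (r s a - etamu P r mu) ^+ 2.

Definition fs (R : realType) N (S : finType) (A : 'I_N -> finType)
  (P : kernel R S A) (r : S -> jact A -> R) (beta : R) (mu : jpol R S A)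
  (s : S) : R :=
  \sum_(a : jact A) jprob mu s a * fsa P r beta mu s a.

(* V_f^mu : some solution of the Poisson equation (unique up to a constant) *)
Definition poisson_sol (R : realType) N (S : finType) (A : 'I_N -> finType)
  (P : kernel R S A) (r : S -> jact A -> R) (beta : R) (mu : jpol R S A)
  (V : {ffun S -> R}) : Prop :=
  forall s, V s = fs P r beta mu s - Jmv P r beta mu + \sum_(s' : S) Pmu P mu s s' * V s'.

Definition Vf (R : realType) N (S : finType) (A : 'I_N -> finType)
  (P : kernel R S A) (r : S -> jact A -> R) (beta : R) (mu : jpol R S A) : {ffun S -> R} :=
  xget [ffun=> 0] [set V | poisson_sol P r beta mu V].

Definition Qf (R : realType) N (S : finType) (A : 'I_N -> finType)
  (P : kernel R S A) (r : S -> jact A -> R) (beta : R) (mu : jpol R S A)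
  (s : S) (a : jact A) : R :=
  fsa P r beta mu s a - Jmv P r beta mu + \sum_(s' : S) P s a s' * Vf P r beta mu s'.

Definition Af (R : realType) N (S : finType) (A : 'I_N -> finType)
  (P : kernel R S A) (r : S -> jact A -> R) (beta : R) (mu : jpol R S A)
  (s : S) (a : jact A) : R :=
  Qf P r beta mu s a - Vf P r beta mu s.

Definition expAdv (R : realType) N (S : finType) (A : 'I_N -> finType)
  (P : kernel R S A) (r : S -> jact A -> R) (beta : R) (mu : jpol R S A)
  (i : 'I_N) (s : S) (ai : A i) : R :=
  \sum_(a : jact A | a i == ai)
     (\prod_(j < N | j != i) mu j s (a j)) * Af P r beta mu s a.

(* Intermediate policy hat-mu^{(k,h)}: agents sigma 0, ..., sigma (h-1) use the
   new policy d', the others the old policy d.                               *)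
Definition hatpol N (S : finType) (A : 'I_N -> finType)
  (sigma : {perm 'I_N}) (d d' : dpol S A) (h : nat) : dpol S A :=
  fun j => if (nat_of_ord ((sigma^-1)%g j) < h)%N then d' j else d j.

(* One outer iteration of MV-MAPI with permutation sigma (i_{h+1} = sigma h,
   h = 0..N-1), from mu^(k) = d to mu^(k+1) = d' (or the unchanged policy d' = d,
   which is the stopping case).                                              *)
Definition mapi_step (R : realType) N (S : finType) (A : 'I_N -> finType)
  (P : kernel R S A) (r : S -> jact A -> R) (beta : R)
  (sigma : {perm 'I_N}) (d d' : dpol S A) : Prop :=
  forall (h : 'I_N) (s : S),
    let i := sigma h in
    let muh : jpol R S A := dpol_to_jpol R (hatpol sigma d d' h) in
    (forall ai : A i, expAdv P r beta muh s ai <= expAdv P r beta muh s (d' i s)) /\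
    ((forall ai : A i, expAdv P r beta muh s ai <= expAdv P r beta muh s (d i s)) ->
       d' i s = d i s).

Definition nash (R : realType) N (S : finType) (A : 'I_N -> finType)
  (P : kernel R S A) (r : S -> jact A -> R) (beta : R) (mu : jpol R S A) : Prop :=
  forall (i : 'I_N) (mi : ipol R S (A i)), ipol_valid mi ->
    Jmv P r beta (deviate mu mi) <= Jmv P r beta mu.

(* Main.v *)
Require Import Defs.
From HB Require Import structures.
From mathcomp Require Import all_boot all_order all_algebra all_fingroup.
From mathcomp Require Import boolp classical_sets reals.
Import Order.TTheory GRing.Theory Num.Theory.
Local Open Scope ring_scope.

Set Implicit Arguments. Unset Strict Implicit. Unset Printing Implicit Defensive.

Lemma dsum_prod (R : realType) (I : finType) (T : I -> finType) (F : forall i, T i -> R) :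
  \sum_(f : {dffun forall i, T i}) \prod_i F i (f i) = \prod_i \sum_(x : T i) F i x.
Proof.
pose P_ := fun i => [ffun x : T i => F i x].
transitivity (\prod_i \sum_(x : T i) P_ i x); last first.
  by apply: eq_bigr => i _; apply: eq_bigr => x _; rewrite ffunE.
under eq_bigr do rewrite (big_tag (fun i => P_ i)).
rewrite bigA_distr_big_dep -big_fprod.
rewrite (reindex (@fprod_of_dffun _ T)); last exact/onW_bij/fprod_of_dffun_bij.
apply: eq_bigr => f _; apply: eq_bigr => i _.
by rewrite fprodE ffunE.
Qed.

Section Markov.
Variables (R : realType) (S : finType) (M : S -> S -> R).
Hypothesis M_ge0 : forall s s', 0 <= M s s'.
Hypothesis M_sum1 : forall s, \sum_s' M s s' = 1.

Lemma sum_ge_term (I : finType) (F : I -> R) j :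
  (forall i, 0 <= F i) -> F j <= \sum_i F i.
Proof.
move=> H; rewrite (bigD1 j) //= lerDl; apply: sumr_ge0 => i _; exact: H.
Qed.

Lemma nstep_stat (p : S -> R) n :
  (forall s', \sum_s p s * M s s' = p s') ->
  forall s', \sum_s p s * nstep M n s s' = p s'.
Proof.
move=> Hp; elim: n => [|n IH] s' /=.
  rewrite (bigD1 s') //= eqxx mulr1 big1 ?addr0 // => s /negbTE ->.
  by rewrite mulr0.
under eq_bigr do rewrite big_distrr /=.
rewrite exchange_big /= -Hp; apply: eq_bigr => t _.
by rewrite -IH big_distrl; apply: eq_bigr => s _; rewrite mulrA.
Qed.

Lemma stat_pos (p : {ffun S -> R}) : stationary M p -> ergodic M ->
  forall s, 0 < p s.
Proof.
move=> [p0 [p1 pM]] [n Hn] s.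
have [t pt] : exists t, 0 < p t.
  apply/not_existsP => H.
  have : \sum_s p s = 0.
    apply: big1 => t _; apply/eqP; rewrite eq_le p0 andbT.
    by rewrite leNgt; apply/negP => /(H t).
  by rewrite p1 => /eqP; rewrite oner_eq0.
rewrite -(nstep_stat n pM s).
have H : p t * nstep M n t s <= \sum_u p u * nstep M n u s.
  apply: (@sum_ge_term S (fun u => p u * nstep M n u s) t) => u.
  by rewrite mulr_ge0 // ltW.
apply: lt_le_trans H; by rewrite mulr_gt0.
Qed.

Lemma left_fix_mult (p : {ffun S -> R}) (w : S -> R) :
  stationary M p -> ergodic M ->
  (forall s', \sum_s w s * M s s' = w s') ->
  exists c, forall s, w s = c * p s.
Proof.
move=> Hst Herg Hw; have pos := stat_pos Hst Herg.
case: Hst => [p0 [p1 pM]].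
case: (pickP S) => [t0 _|S0]; last by exists 0 => s; have := S0 s.
have [s0 _ Hmin] := @arg_minP _ R S t0 xpredT (fun s => w s / p s) isT.
exists (w s0 / p s0) => s.
set c := w s0 / p s0.
pose u s := w s - c * p s.
have u0 : forall s, 0 <= u s.
  move=> t; rewrite /u subr_ge0 -ler_pdivlMr //; exact: Hmin.
have uM : forall s', \sum_s u s * M s s' = u s'.
  move=> s'; rewrite /u.
  under eq_bigr do rewrite mulrBl.
  by rewrite sumrB Hw -pM big_distrr /=; congr (_ - _); apply: eq_bigr => t _; rewrite mulrA.
have us0 : u s0 = 0 by rewrite /u /c divfK ?subrr // gt_eqF.
case: Herg => n Hn.
have := nstep_stat n uM s0; rewrite us0 => /eqP; rewrite psumr_eq0; last first.
  by move=> t _; rewrite mulr_ge0 // ltW.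
move=> /allP /(_ s) /(_ (mem_index_enum _)) /=.
rewrite mulf_eq0 (gt_eqF (Hn _ _)) orbF /u subr_eq0 => /eqP //.
Qed.


Lemma sumS (F : S -> R) : \sum_(s : S) F s = \sum_(k < #|S|) F (enum_val k).
Proof. by rewrite -big_enum_val; apply: eq_bigl => s; rewrite inE. Qed.

Definition Bm : 'M[R]_#|S| :=
  \matrix_(i, j) ((i == j)%:R - M (enum_val i) (enum_val j)).

Lemma rowB_fix (u : 'rV[R]_#|S|) : u *m Bm = 0 ->
  forall s', \sum_s u 0 (enum_rank s) * M s s' = u 0 (enum_rank s').
Proof.
move=> /matrixP H s'; have := H 0 (enum_rank s'); rewrite !mxE.
under eq_bigr do rewrite !mxE mulrBr.
rewrite sumrB (bigD1 (enum_rank s')) //= eqxx mulr1 big1 ?addr0; last first.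
  by move=> k /negbTE; rewrite eq_sym => ->; rewrite mulr0.
move/eqP; rewrite subr_eq0 => /eqP ->.
rewrite sumS; apply: eq_bigr => k _; by rewrite enum_valK enum_rankK.
Qed.

Lemma stat_exists (t0 : S) : exists p, stationary M p.
Proof.
pose ones : 'cV[R]_#|S| := const_mx 1.
have Bones : Bm *m ones = 0.
  apply/matrixP => i j; rewrite !mxE.
  under eq_bigr do rewrite !mxE mulr1.
  rewrite sumrB (bigD1 i) //= eqxx big1 ?addr0; last first.
    by move=> k /negbTE; rewrite eq_sym => ->.
  by rewrite -sumS M_sum1 subrr.
have rk : (\rank Bm < #|S|)%N.
  rewrite ltn_neqAle rank_leq_col andbT; apply/negP => Hf.
  have : Bm \in unitmx by rewrite -row_free_unit /row_free.
  move=> uB; have := mulKmx uB ones; rewrite Bones mulmx0 => /matrixP /(_ (enum_rank t0) 0).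
  by rewrite !mxE => /eqP; rewrite eq_sym oner_eq0.
have Knz : kermx Bm != 0.
  by rewrite -mxrank_eq0 mxrank_ker subn_eq0 -ltnNge.
have [i [j Kij]] : exists i j, (kermx Bm) i j != 0.
  apply: contrapT => H; move/negP: Knz; apply; apply/eqP/matrixP => i j.
  have -> : (0 : 'M[R]_#|S|) i j = 0 by rewrite mxE.
  apply/eqP/negPn/negP => Hij; apply: H; exists i, j; exact: Hij.
pose u := row i (kermx Bm).
have uB : u *m Bm = 0 by apply/sub_kermxP; exact: row_sub.
have Hw := rowB_fix uB.
pose w s := u 0 (enum_rank s).
pose q s := `|w s|.
have qM : forall s', \sum_s q s * M s s' = q s'.
  have ge : forall s', q s' <= \sum_s q s * M s s'.
    move=> s'; rewrite /q /w -Hw.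
    apply: (le_trans (ler_norm_sum _ _ _)); apply: ler_sum => s _.
    by rewrite normrM (ger0_norm (M_ge0 _ _)).
  have tot : \sum_s' (\sum_s q s * M s s' - q s') = 0.
    rewrite sumrB exchange_big /=.
    under eq_bigr do rewrite -big_distrr /= M_sum1 mulr1.
    by rewrite subrr.
  move=> s'; apply/eqP; rewrite -subr_eq0; apply/eqP.
  move/eqP: tot; rewrite psumr_eq0; last by move=> t _; rewrite subr_ge0.
  by move/allP/(_ s' (mem_index_enum _))/eqP.
have qpos : 0 < \sum_s q s.
  have : q (enum_val j) <= \sum_s q s by apply: sum_ge_term => s; exact: normr_ge0.
  apply: lt_le_trans; rewrite /q /w normr_gt0 enum_valK /u mxE //.
exists [ffun s => q s / \sum_t q t]; rewrite /stationary; split; last split.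
- by move=> s; rewrite ffunE divr_ge0 ?normr_ge0 // ltW.
- under eq_bigr do rewrite ffunE.
  by rewrite -big_distrl /= divff // gt_eqF.
- move=> s'; rewrite ffunE -qM big_distrl /=; apply: eq_bigr => s _.
  by rewrite ffunE mulrAC.
Qed.



Lemma poisson_exists (p : {ffun S -> R}) (b : S -> R) :
  stationary M p -> ergodic M -> \sum_s p s * b s = 0 ->
  exists V : {ffun S -> R}, forall s, V s = b s + \sum_s' M s s' * V s'.
Proof.
move=> Hst Herg Hpb.
pose bcol : 'rV[R]_#|S| := \row_k b (enum_val k).
have sub : (bcol <= Bm^T)%MS.
  rewrite submxE; move: (cokermx (Bm^T)) (mulmx_coker (Bm^T)) => C HC.
  apply/eqP/matrixP => z j; rewrite !mxE.
  pose w s := C (enum_rank s) j.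
  have wM : forall s', \sum_s w s * M s s' = w s'.
    move=> s'; have := HC; move/matrixP/(_ (enum_rank s') j); rewrite !mxE.
    under eq_bigr do rewrite !mxE mulrBl.
    rewrite sumrB (bigD1 (enum_rank s')) //= eqxx mul1r big1 ?addr0; last first.
      by move=> k /negbTE ->; rewrite mul0r.
    move/eqP; rewrite subr_eq0 => /eqP Heq.
    rewrite /w Heq sumS; apply: eq_bigr => k _.
    by rewrite enum_valK enum_rankK mulrC.
  have [c Hc] := left_fix_mult Hst Herg wM.
  have -> : \sum_k bcol z k * C k j = \sum_s b s * w s.
    rewrite sumS; apply: eq_bigr => k _; by rewrite mxE /w enum_valK.
  under eq_bigr do rewrite Hc mulrCA.
  by rewrite -big_distrr /= (eq_bigr (fun s => p s * b s)) ?Hpb ?mulr0 // => s _; rewrite mulrC.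
have [D HD] := submxP sub.
exists [ffun s => D 0 (enum_rank s)] => s.
have := HD; move/matrixP/(_ 0 (enum_rank s)); rewrite !mxE enum_rankK.
under eq_bigr do rewrite !mxE mulrBr.
rewrite sumrB (bigD1 (enum_rank s)) //= eqxx mulr1 big1 ?addr0; last first.
  by move=> k /negbTE; rewrite eq_sym => ->; rewrite mulr0.
move=> ->; rewrite ffunE enum_rankK.
have -> : \sum_s' M s s' * [ffun s0 => D 0 (enum_rank s0)] s' =
   \sum_(i < #|S|) D 0 i * M s (enum_val i).
  rewrite sumS; apply: eq_bigr => k _; by rewrite ffunE enum_valK mulrC.
by rewrite subrK.
Qed.

End Markov.

Section Pol.
Variables (R : realType) (N : nat) (S : finType) (A : 'I_N -> finType).
Implicit Types (mu : jpol R S A) (d : dpol S A).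

Lemma jprob_ge0 mu s a : jpol_valid mu -> 0 <= jprob mu s a.
Proof. by move=> H; apply: prodr_ge0 => i _; case: (H i). Qed.

Lemma jprob_sum1 mu s : jpol_valid mu -> \sum_(a : jact A) jprob mu s a = 1.
Proof.
move=> H; rewrite /jprob (@dsum_prod R _ A (fun i x => mu i s x)).
by apply: big1 => i _; case: (H i) => _ ->.
Qed.

Lemma jprob_dev mu i (mi : ipol R S (A i)) s (a : jact A) :
  jprob (deviate mu mi) s a = mi s (a i) * \prod_(j < N | j != i) mu j s (a j).
Proof.
rewrite /jprob (bigD1 i) //= /deviate dfwith_in; congr (_ * _).
by apply: eq_bigr => j ji; rewrite dfwith_out // eq_sym.
Qed.

Lemma sum_dev mu i (mi : ipol R S (A i)) s (F : jact A -> R) :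
  \sum_(a : jact A) jprob (deviate mu mi) s a * F a =
  \sum_(ai : A i) mi s ai *
     \sum_(a : jact A | a i == ai) (\prod_(j < N | j != i) mu j s (a j)) * F a.
Proof.
rewrite (partition_big (fun a : jact A => a i) predT) //=.
apply: eq_bigr => ai _; rewrite big_distrr /=; apply: eq_bigr => a /eqP <-.
by rewrite jprob_dev mulrA.
Qed.

Lemma deviate_self mu i : deviate mu (mu i) = mu.
Proof.
apply: functional_extensionality_dep => j; rewrite /deviate.
by case: dfwithP.
Qed.

Lemma det_sum d i s (G : A i -> R) :
  \sum_(ai : A i) @dpol_to_jpol R _ _ _ d i s ai * G ai = G (d i s).
Proof.
rewrite (bigD1 (d i s)) //= /dpol_to_jpol eqxx mul1r big1 ?addr0 //.
by move=> ai /negbTE ->; rewrite mul0r.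
Qed.

Lemma dpol_valid d : jpol_valid (dpol_to_jpol R d).
Proof.
move=> i; split => [s a|s]; first by rewrite /dpol_to_jpol; case: eqP.
by rewrite -[RHS](@det_sum d i s (fun _ => 1)); apply: eq_bigr => a _; rewrite mulr1.
Qed.

Lemma deviate_valid mu i (mi : ipol R S (A i)) :
  jpol_valid mu -> ipol_valid mi -> jpol_valid (deviate mu mi).
Proof. by move=> H Hi j; rewrite /deviate; case: dfwithP. Qed.

Lemma Pmu_ge0 (P : kernel R S A) mu : kernel_valid P -> jpol_valid mu ->
  forall s s', 0 <= Pmu P mu s s'.
Proof.
move=> [P0 _] H s s'; apply: sumr_ge0 => a _; rewrite mulr_ge0 //.
exact: jprob_ge0.
Qed.

Lemma Pmu_sum1 (P : kernel R S A) mu : kernel_valid P -> jpol_valid mu ->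
  forall s, \sum_s' Pmu P mu s s' = 1.
Proof.
move=> [_ P1] H s; rewrite /Pmu exchange_big /=.
under eq_bigr do rewrite -big_distrr /= P1 mulr1.
exact: jprob_sum1.
Qed.

End Pol.

Section MDP.
Variables (R : realType) (N : nat) (S : finType) (A : 'I_N -> finType)
  (P : kernel R S A) (r : S -> jact A -> R) (beta : R).
Hypothesis Hker : kernel_valid P.
Hypothesis Herg : forall mu : jpol R S A, jpol_valid mu -> ergodic (Pmu P mu).
Hypothesis Heta : forall mu mu' : jpol R S A, jpol_valid mu -> jpol_valid mu' ->
     etamu P r mu = etamu P r mu'.
Implicit Types (mu : jpol R S A).

Lemma statdist_stat mu (t0 : S) : jpol_valid mu ->
  stationary (Pmu P mu) (statdist P mu).
Proof.
move=> H; rewrite /statdist; apply: xgetPex.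
exact: (stat_exists (Pmu_ge0 Hker H) (Pmu_sum1 Hker H) t0).
Qed.

Lemma statdist_pos mu (t0 : S) s : jpol_valid mu -> 0 < statdist P mu s.
Proof. by move=> H; apply: stat_pos (statdist_stat t0 H) (Herg H) s. Qed.

Lemma Jmv_eq mu : Jmv P r beta mu = \sum_s statdist P mu s * fs P r beta mu s.
Proof.
rewrite /Jmv /zeta /fs /fsa.
set E := etamu P r mu.
have HE : E = \sum_s statdist P mu s * \sum_a jprob mu s a * r s a by [].
rewrite {1}HE mulr_sumr -sumrB; apply: eq_bigr => s _.
rewrite mulrCA -mulrBr; congr (_ * _).
rewrite mulr_sumr -sumrB; apply: eq_bigr => a _.
by rewrite mulrCA -mulrBr.
Qed.

Lemma Vf_poisson mu (t0 : S) : jpol_valid mu ->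
  poisson_sol P r beta mu (Vf P r beta mu).
Proof.
move=> H; rewrite /Vf; apply: xgetPex.
have Hst := statdist_stat t0 H.
have Hb : \sum_s statdist P mu s * (fs P r beta mu s - Jmv P r beta mu) = 0.
  under eq_bigr do rewrite mulrBr.
  rewrite sumrB -big_distrl /= -Jmv_eq.
  by case: Hst => _ [-> _]; rewrite mul1r subrr.
have [V HV] := poisson_exists Hst (Herg H) Hb.
by exists V => s; rewrite /= HV.
Qed.

Lemma avg_Af mu mu' s : jpol_valid mu' ->
  \sum_a jprob mu' s a * Af P r beta mu s a =
  \sum_a jprob mu' s a * fsa P r beta mu s a - Jmv P r beta mu
  + \sum_s' Pmu P mu' s s' * Vf P r beta mu s' - Vf P r beta mu s.
Proof.
move=> H'; rewrite /Af /Qf; move: (fsa P r beta mu) => F.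
have HX : \sum_a jprob mu' s a * \sum_s' P s a s' * Vf P r beta mu s' =
          \sum_s' Pmu P mu' s s' * Vf P r beta mu s'.
  under eq_bigr do rewrite big_distrr /=.
  rewrite exchange_big /=; apply: eq_bigr => s' _.
  rewrite /Pmu big_distrl /=; apply: eq_bigr => a _; by rewrite mulrA.
under eq_bigr do rewrite mulrBr !mulrDr mulrN.
rewrite !big_split /= !sumrN HX -!big_distrl /= jprob_sum1 // !mul1r.
done.
Qed.

Lemma adv_avg0 mu (t0 : S) s : jpol_valid mu ->
  \sum_a jprob mu s a * Af P r beta mu s a = 0.
Proof.
move=> H; rewrite avg_Af //; apply/eqP; rewrite subr_eq0; apply/eqP.
by rewrite [RHS](Vf_poisson t0 H s).
Qed.

Lemma perf_diff mu mu' (t0 : S) : jpol_valid mu -> jpol_valid mu' ->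
  Jmv P r beta mu' - Jmv P r beta mu =
  \sum_s statdist P mu' s * \sum_a jprob mu' s a * Af P r beta mu s a.
Proof.
move=> H H'.
have Hf : fsa P r beta mu = fsa P r beta mu' by rewrite /fsa (Heta H H').
under eq_bigr do rewrite avg_Af // Hf -/(fs P r beta mu' _).
rewrite (Jmv_eq mu').
move: (fs P r beta mu') => F.
have [p0 [p1 pM]] := statdist_stat t0 H'.
have HX : \sum_s statdist P mu' s * \sum_s' Pmu P mu' s s' * Vf P r beta mu s' =
          \sum_s statdist P mu' s * Vf P r beta mu s.
  under eq_bigr do rewrite big_distrr /=.
  rewrite exchange_big /=; apply: eq_bigr => s' _.
  by rewrite -pM big_distrl /=; apply: eq_bigr => s _; rewrite mulrA.
under eq_bigr do rewrite mulrBr !mulrDr mulrN.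
rewrite !big_split /= !sumrN HX -!big_distrl /= p1 mul1r.
by rewrite addrK.
Qed.


Local Notation djp d := (@dpol_to_jpol R N S A d).
Local Notation J mu := (Jmv P r beta mu).

Lemma dev_gain mu i (mi : ipol R S (A i)) (t0 : S) :
  jpol_valid mu -> ipol_valid mi ->
  J (deviate mu mi) - J mu =
  \sum_s statdist P (deviate mu mi) s *
     \sum_(ai : A i) mi s ai * expAdv P r beta mu s ai.
Proof.
move=> H Hi; rewrite (perf_diff t0 H (deviate_valid H Hi)).
by apply: eq_bigr => s _; rewrite sum_dev.
Qed.

Lemma expAdv_self (d : dpol S A) i s :
  expAdv P r beta (djp d) s (d i s) = 0.
Proof.
have := adv_avg0 s s (dpol_valid R d).
rewrite -{1}(deviate_self (djp d) i) sum_dev det_sum.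
by rewrite /expAdv.
Qed.

Lemma nash_of (d : dpol S A) :
  (forall i s (ai : A i), expAdv P r beta (djp d) s ai <=
                           expAdv P r beta (djp d) s (d i s)) ->
  nash P r beta (djp d).
Proof.
move=> H i mi Hmi; case: (pickP S) => [t0 _|S0].
  rewrite -subr_le0 (dev_gain t0 (dpol_valid R d) Hmi).
  apply: sumr_le0 => s _; apply: mulr_ge0_le0.
    by case: (statdist_stat t0 (deviate_valid (dpol_valid R d) Hmi)).
  apply: sumr_le0 => ai _; apply: mulr_ge0_le0; first by case: Hmi.
  by rewrite -(expAdv_self d i s); exact: H.
have E : forall F : S -> R, \sum_s F s = 0.
  by move=> F; apply: big1 => s; have := S0 s.
by rewrite !Jmv_eq !E.
Qed.

Lemma hat_step (sig : {perm 'I_N}) (d d' : dpol S A) (h : 'I_N) :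
  djp (hatpol sig d d' h.+1) =
  deviate (djp (hatpol sig d d' h)) (@dpol_to_jpol R N S A d' (sig h)).
Proof.
apply: functional_extensionality_dep => j; rewrite /deviate; case: dfwithP => [|k ne].
  by rewrite /dpol_to_jpol /hatpol permK ltnSn.
have hk : (nat_of_ord ((sig^-1)%g k) != nat_of_ord h).
  apply/eqP => E; have E' : (sig^-1)%g k = h by apply: val_inj.
  by move/eqP: ne; apply; rewrite -E' permKV.
by rewrite /dpol_to_jpol /hatpol ltnS leq_eqVlt (negbTE hk).
Qed.

Lemma hat0 (sig : {perm 'I_N}) (d d' : dpol S A) : hatpol sig d d' 0 = d.
Proof. by apply: functional_extensionality_dep => j; rewrite /hatpol ltn0. Qed.

Lemma hatN (sig : {perm 'I_N}) (d d' : dpol S A) : hatpol sig d d' N = d'.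
Proof. by apply: functional_extensionality_dep => j; rewrite /hatpol ltn_ord. Qed.

Lemma step_mono (sig : {perm 'I_N}) (d d' : dpol S A) (h : 'I_N) (t0 : S) :
  mapi_step P r beta sig d d' ->
  J (djp (hatpol sig d d' h)) <= J (djp (hatpol sig d d' h.+1)) /\
  ((exists s, d' (sig h) s != d (sig h) s) ->
    J (djp (hatpol sig d d' h)) < J (djp (hatpol sig d d' h.+1))).
Proof.
move=> Hs.
set mu := djp (hatpol sig d d' h).
have Hv := dpol_valid R (hatpol sig d d' h).
have key : J (djp (hatpol sig d d' h.+1)) - J mu =
   \sum_s statdist P (djp (hatpol sig d d' h.+1)) s *
       expAdv P r beta mu s (d' (sig h) s).
  rewrite hat_step (dev_gain t0 Hv (dpol_valid R d' (sig h))).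
  by apply: eq_bigr => s _; rewrite det_sum.
have hself : forall s, expAdv P r beta mu s (d (sig h) s) = 0.
  move=> s; have -> : d (sig h) s = hatpol sig d d' h (sig h) s.
    by rewrite /hatpol permK ltnn.
  exact: expAdv_self.
have nonneg : forall s, 0 <= expAdv P r beta mu s (d' (sig h) s).
  move=> s; have [H1 _] := Hs h s.
  by rewrite -(hself s); exact: H1.
have Hv' := dpol_valid R (hatpol sig d d' h.+1).
split.
  rewrite -subr_ge0 key; apply: sumr_ge0 => s _; apply: mulr_ge0 => //.
  by case: (statdist_stat t0 Hv').
move=> [s ne]; rewrite -subr_gt0 key.
have [_ H2] := Hs h s.
have [ai Hai] : exists ai : A (sig h),
    ~ (expAdv P r beta mu s ai <= expAdv P r beta mu s (d (sig h) s)).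
  apply/existsNP => Hall; move/eqP: ne; apply; exact: H2.
have pos : 0 < expAdv P r beta mu s (d' (sig h) s).
  have [H1 _] := Hs h s.
  apply: lt_le_trans (H1 ai); rewrite -(hself s) ltNge; apply/negP; exact: Hai.
have Hterm : statdist P (djp (hatpol sig d d' h.+1)) s *
      expAdv P r beta mu s (d' (sig h) s) <=
   \sum_s statdist P (djp (hatpol sig d d' h.+1)) s *
       expAdv P r beta mu s (d' (sig h) s).
  apply: (sum_ge_term (F := fun s => statdist P (djp (hatpol sig d d' h.+1)) s *
       expAdv P r beta mu s (d' (sig h) s)) s) => u.
  apply: mulr_ge0 => //; by case: (statdist_stat t0 Hv').
apply: lt_le_trans Hterm; apply: mulr_gt0 => //; exact: statdist_pos.
Qed.

Lemma iter_mono (sig : {perm 'I_N}) (d d' : dpol S A) (t0 : S) :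
  mapi_step P r beta sig d d' ->
  J (djp d) <= J (djp d') /\
  ((exists i s, d' i s != d i s) -> J (djp d) < J (djp d')).
Proof.
move=> Hs.
pose g h := J (djp (hatpol sig d d' h)).
have mono1 : forall h, (h < N)%N -> g h <= g h.+1.
  by move=> h hN; exact: (step_mono (Ordinal hN) t0 Hs).1.
have monoR : forall h1 h2, (h1 <= h2)%N -> (h2 <= N)%N -> g h1 <= g h2.
  move=> h1; elim=> [|h2 IH]; first by rewrite leqn0 => /eqP ->.
  rewrite leq_eqVlt => /orP [/eqP -> //|]; rewrite ltnS => le12 h2N.
  apply: le_trans (IH le12 (ltnW h2N)) (mono1 _ h2N).
have g0 : g 0%N = J (djp d) by rewrite /g hat0.
have gN : g N = J (djp d') by rewrite /g hatN.
split; first by rewrite -g0 -gN; apply: monoR.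
move=> [i [s ne]].
pose h := (sig^-1)%g i.
have ne' : d' (sig h) s != d (sig h) s by rewrite /h permKV.
have := (step_mono h t0 Hs).2 (ex_intro _ s ne') => lt.
rewrite -g0 -gN; apply: le_lt_trans (monoR 0%N h _ _) _ => //; first exact: ltnW.
by apply: lt_le_trans lt (monoR _ _ _ _).
Qed.

End MDP.

Lemma strict_chain (R : realType) (f : nat -> R) :
  (forall k, f k < f k.+1) -> forall k1 k2, (k1 < k2)%N -> f k1 < f k2.
Proof.
move=> H k1; elim=> [//|k2 IH]; rewrite ltnS leq_eqVlt => /orP [/eqP -> //|lt].
exact: lt_trans (IH lt) (H k2).
Qed.


Unset Implicit Arguments. Set Strict Implicit.

Theorem corollary2 (R : realType) (N : nat) (S : finType) (A : 'I_N -> finType)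
  (P : kernel R S A) (r : S -> jact A -> R) (beta : R) :
  kernel_valid P ->
  0 <= beta ->
  (forall mu : jpol R S A, jpol_valid mu -> ergodic (Pmu P mu)) ->
  (forall mu mu' : jpol R S A, jpol_valid mu -> jpol_valid mu' ->
     etamu P r mu = etamu P r mu') ->
  forall (d : nat -> dpol S A) (sigma : nat -> {perm 'I_N}),
    (forall k, mapi_step P r beta (sigma k) (d k) (d k.+1)) ->
    exists K : nat,
      (forall i s, d K.+1 i s = d K i s) /\
      nash P r beta (dpol_to_jpol R (d K)).
Proof.
move=> Hker _ Herg Heta d sig Hstep.
case: (pselect (exists K, forall i s, d K.+1 i s = d K i s)) => [[K HK]|Hno].
  exists K; split => //; apply: (nash_of Hker Herg Heta).
  have hatE : forall h, hatpol (sig K) (d K) (d K.+1) h = d K.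
    move=> h; apply: functional_extensionality_dep => j.
    apply: funext => s; rewrite /hatpol.
    by case: ifP => // _; rewrite HK.
  have G : forall (h : 'I_N) s (ai : A (sig K h)),
      expAdv P r beta (dpol_to_jpol R (d K)) s ai <=
      expAdv P r beta (dpol_to_jpol R (d K)) s (d K (sig K h) s).
    move=> h s ai; have [H1 _] := Hstep K h s.
    by move: H1; rewrite /= hatE HK; apply.
  move=> i; rewrite -[i](permKV (sig K)); exact: G.
exfalso.
have Hch : forall k, exists i s, d k.+1 i s != d k i s.
  move=> k; apply: contrapT => H; apply: Hno; exists k => i s.
  apply/eqP; apply: contrapT => /negP ne; apply: H; exists i, s; exact: ne.
have [i0 [t0 _]] := Hch 0%N.
pose f k := Jmv P r beta (dpol_to_jpol R (d k)).
have Hinc : forall k, f k < f k.+1.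
  move=> k; exact: ((iter_mono Hker Herg Heta t0 (Hstep k)).2 (Hch k)).
pose T := {dffun forall i : 'I_N, {ffun S -> A i}}.
pose code (k : nat) : T := finfun (fun i => [ffun s => d k i s]).
pose g (k : 'I_(#|T|.+1)) := code k.
have ginj : injective g.
  move=> k1 k2 Hg.
  have Heq : forall i s, d k1 i s = d k2 i s.
    move=> i s; move/ffunP: Hg => /(_ i); rewrite !ffunE => /ffunP /(_ s).
    by rewrite !ffunE.
  have Hf : f k1 = f k2.
    rewrite /f; congr (Jmv _ _ _ _); rewrite /dpol_to_jpol.
    apply: functional_extensionality_dep => i.
    apply: funext => s; by rewrite Heq.
  apply: val_inj => /=.
  case: (ltngtP k1 k2) => // lt; move: (strict_chain Hinc lt); by rewrite Hf ltxx.
have := leq_card g ginj; by rewrite card_ord ltnn.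
Qed.
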